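(* Let $\varphi$ be a finite conjunction of literals of the two forms $x\in y$ and $x = y\setminus z$ (with $x,y,z$ set variables), with finite set of variables $\mathrm{Vars}(\varphi)$, and let $\bar n=|\mathrm{Vars}(\varphi)|$. Let $M$ be a set assignment over $\mathrm{Vars}(\varphi)$ satisfying $\varphi$; let $\bar x,\bar y\in\mathrm{Vars}(\varphi)$, let $\overline{M}$ be a set assignment over $\mathrm{Vars}(\varphi)$ satisfying $\varphi$ with $\overline{M}\bar x\neq \overline{M}\bar y$, and let $\mathfrak{t}$ be a set belonging to exactly one of $\overline{M}\bar x$, $\overline{M}\bar y$. Fix a set $\mathfrak{s}$ with $\mathrm{rk}(\mathfrak{s})>\mathrm{rk}(M)$. Define $\mathsf{V}_0=\{u\in\mathrm{Vars}(\varphi)\mid \mathfrak{t}\in\overline{M}u\}$; $\mathsf{V}_n=\{u\in\mathrm{Vars}(\varphi)\mid Mu\cap\{Mw\mid w\in\mathsf{V}_{n-1}\}\neq\emptyset\}$ for $n\ge1$; $M_0v=Mv\cup\{\mathfrak{s}\}$ if $v\in\mathsf{V}_0$ and $M_0v=Mv$ otherwise; for $n\ge1$, $M_nv=M_{n-1}v\cup\{M_{n-1}u\mid u\in\mathsf{V}_{n-1},\ Mu\in Mv\}$ if $v\in\mathsf{V}_n$ and $M_nv=M_{n-1}v$ otherwise. Then the set assignment $M_{\bar n}$ satisfies $\varphi$.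
   Context: A set assignment is a map from a finite set of set variables into the von Neumann universe $\mathcal{V}=\bigcup_\alpha\mathcal{V}_\alpha$, $\mathcal{V}_\alpha=\bigcup_{\beta<\alpha}\mathcal{P}(\mathcal{V}_\beta)$; it satisfies $x\in y$ iff $Mx\in My$ and $x=y\setminus z$ iff $Mx=My\setminus Mz$, and satisfies a conjunction iff it satisfies each conjunct. The rank $\mathrm{rk}(s)$ of a set $s$ is the least ordinal $\alpha$ with $s\subseteq\mathcal{V}_\alpha$, and $\mathrm{rk}(M)=\max\{\mathrm{rk}(Mx)\mid x\in\mathrm{dom}(M)\}$. *)

(* Defs.v *)
(* Stdlib + mathcomp boot world.  The von Neumann universe is modelled by
   Aczel's type-theoretic sets (well-founded trees with extensional equality). *)
From mathcomp Require Import all_boot.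
From Stdlib Require Import ClassicalDescription.

Set Implicit Arguments.
Unset Strict Implicit.
Unset Printing Implicit Defensive.

Inductive Vset : Type := sup (A : Type) (f : A -> Vset).

Fixpoint eqV (x y : Vset) : Prop :=
  match x, y with
  | sup A f, sup B g =>
      (forall a, exists b, eqV (f a) (g b)) /\ (forall b, exists a, eqV (f a) (g b))
  end.

Definition memV (x y : Vset) : Prop :=
  match y with sup B g => exists b, eqV x (g b) end.

Definition union2 (x y : Vset) : Vset :=
  match x, y with
  | sup A f, sup B g =>
      sup (fun c : A + B => match c with inl a => f a | inr b => g b end)
  end.

Definition single (x : Vset) : Vset := sup (fun _ : unit => x).

Definition setdiff (y z : Vset) : Vset :=
  match y with
  | sup B g => sup (fun b : {b : B | ~ memV (g b) z} => g (proj1_sig b))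
  end.

(* ---------- ranks ----------
   rk_le x y  <->  rk(x) <= rk(y);   rk_lt x y  <->  rk(x) < rk(y).
   Since rk(y) = sup { rk(b)+1 | b in y }, we have
   rk x < rk y  iff  exists b in y, rk x <= rk b, and
   rk x <= rk y iff  forall a in x, rk a < rk y. *)
Fixpoint rk_le (x y : Vset) : Prop :=
  match x with
  | sup A f => forall a, match y with sup B g => exists b, rk_le (f a) (g b) end
  end.

Definition rk_lt (x y : Vset) : Prop :=
  match y with sup B g => exists b, rk_le x (g b) end.

Inductive lit : Type :=
| LMem (x y : nat)
| LDiff (x y z : nat).

Definition lit_vars (l : lit) : seq nat :=
  match l with LMem x y => [:: x; y] | LDiff x y z => [:: x; y; z] end.

Definition formula := seq lit.

Definition Vars (phi : formula) : seq nat := undup (flatten (map lit_vars phi)).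

Definition assignment := nat -> Vset.

Definition sat_lit (M : assignment) (l : lit) : Prop :=
  match l with
  | LMem x y => memV (M x) (M y)
  | LDiff x y z => eqV (M x) (setdiff (M y) (M z))
  end.

Definition satisfies (M : assignment) (phi : formula) : Prop :=
  forall l, List.In l phi -> sat_lit M l.

(* rk(M) < rk(s), with rk(M) = max over Vars(phi) of rk(M u) *)
Definition rank_assign_lt (phi : formula) (M : assignment) (s : Vset) : Prop :=
  forall u, u \in Vars phi -> rk_lt (M u) s.

Section Construction.
Variables (phi : formula) (M Mbar : assignment) (t s : Vset).

Fixpoint VV (n : nat) (u : nat) : Prop :=
  u \in Vars phi /\
  match n with
  | 0 => memV t (Mbar u)
  | n'.+1 => exists w, VV n' w /\ memV (M w) (M u)
  end.

Fixpoint MM (n : nat) : assignment :=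
  match n with
  | 0 => fun v =>
      if excluded_middle_informative (VV 0 v) then union2 (M v) (single s) else M v
  | n'.+1 => fun v =>
      if excluded_middle_informative (VV n'.+1 v) then
        union2 (MM n' v)
               (sup (fun u : {u : nat | VV n' u /\ memV (M u) (M v)} => MM n' (proj1_sig u)))
      else MM n' v
  end.

End Construction.

(* Main.v *)
Require Import Defs.
From mathcomp Require Import all_boot.
From Stdlib Require Import ClassicalDescription Relation_Operators Transitive_Closure.
Set Implicit Arguments.
Unset Strict Implicit.

Lemma eqV_refl x : eqV x x.
Proof. elim: x => A f IH /=; split=> a; exists a; exact: IH. Qed.

Lemma eqV_sym x y : eqV x y -> eqV y x.
Proof.
elim: x y => A f IH [B g] /= [H1 H2]; split.
- move=> b; have [a Ha] := H2 b; exists a; exact: IH.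
- move=> a; have [b Hb] := H1 a; exists b; exact: IH.
Qed.

Lemma eqV_trans x y z : eqV x y -> eqV y z -> eqV x z.
Proof.
elim: x y z => A f IH [B g] [C h] /= [H1 H2] [H3 H4]; split.
- move=> a; have [b Hb] := H1 a; have [c Hc] := H3 b; exists c; exact: IH Hb Hc.
- move=> c; have [b Hb] := H4 c; have [a Ha] := H2 b; exists a; exact: IH Ha Hb.
Qed.

Lemma memV_l a a' b : eqV a a' -> memV a b -> memV a' b.
Proof. case: b => B g /= H [b Hb]; exists b; apply: eqV_trans Hb; exact: eqV_sym. Qed.

Lemma memV_r a b b' : eqV b b' -> memV a b -> memV a b'.
Proof.
case: b b' => B g [C h] /= [H1 _] [b Hb]; have [c Hc] := H1 b; exists c.
exact: eqV_trans Hb Hc.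
Qed.

Lemma ext a b : (forall e, memV e a -> memV e b) -> (forall e, memV e b -> memV e a) -> eqV a b.
Proof.
case: a b => A f [B g] /= H1 H2; split.
- move=> a; have [b Hb] := H1 (f a) (ex_intro _ a (eqV_refl _)); by exists b.
- move=> b; have [a Ha] := H2 (g b) (ex_intro _ b (eqV_refl _)); exists a; exact: eqV_sym.
Qed.

Lemma memV_union e a b : memV e (union2 a b) <-> memV e a \/ memV e b.
Proof.
case: a b => A f [B g] /=; split.
- case=> -[a|b] H; [left; exists a | right; exists b]; done.
- case=> -[x H]; [exists (inl x) | exists (inr x)]; done.
Qed.

Lemma memV_single e x : memV e (single x) <-> eqV e x.
Proof. split; [by case | by exists tt]. Qed.

Lemma memV_setdiff e a b : memV e (setdiff a b) <-> memV e a /\ ~ memV e b.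
Proof.
case: a => B g /=; split.
- case=> -[b0 Hb0] /= H; split; first by exists b0.
  move=> Heb; apply: Hb0; exact: memV_l H Heb.
- case=> -[b0 H] Hn.
  have Hb0 : ~ memV (g b0) b by move=> Hg; apply: Hn; apply: memV_l Hg; exact: eqV_sym.
  by exists (exist _ b0 Hb0).
Qed.

Lemma Acc_eqV y z : Acc memV z -> eqV y z -> Acc memV y.
Proof. move=> Hz Hyz; constructor=> w Hw; apply: (Acc_inv Hz); exact: memV_r Hyz Hw. Qed.

Lemma wf_memV : well_founded memV.
Proof. move=> x; elim: x => A f IH; constructor=> y /= [a Ha]; exact: Acc_eqV (IH a) Ha. Qed.

Lemma acc_irr (T : Type) (R : T -> T -> Prop) x : Acc R x -> ~ R x x.
Proof. elim=> z _ IH Hzz; exact: (IH z Hzz Hzz). Qed.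

Lemma eqV_rk_le x y : eqV x y -> rk_le x y.
Proof. elim: x y => A f IH [B g] /= [H1 _] a; have [b Hb] := H1 a; exists b; exact: IH. Qed.

Lemma rk_le_trans x y z : rk_le x y -> rk_le y z -> rk_le x z.
Proof.
elim: x y z => A f IH [B g] [C h] /= H1 H2 a; have [b Hb] := H1 a; have [c Hc] := H2 b.
exists c; exact: IH Hb Hc.
Qed.

Lemma rk_le_elem_gen x y : rk_le x y -> match x with sup A f => forall a, rk_le (f a) y end.
Proof.
elim: x y => A f IH [B g] /= H a.
have [b Hb] := H a.
have := IH a (g b) Hb.
case fa: (f a) => [A' f'] /= H' a'.
exists b; exact: H'.
Qed.

Lemma rk_lt_le x y : rk_lt x y -> rk_le x y.
Proof.
case: x => A f; case: y => B g [b Hb] a; exists b.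
exact: (@rk_le_elem_gen (sup f) (g b) Hb a).
Qed.

Lemma rk_le_lt_trans a b c : rk_le a b -> rk_lt b c -> rk_lt a c.
Proof. case: c => C h /= H [c Hc]; exists c; exact: rk_le_trans H Hc. Qed.

Lemma rk_lt_le_trans a b c : rk_lt a b -> rk_le b c -> rk_lt a c.
Proof.
case: b => B g /= [b1 Hb1]; case: c => C h /= H.
have [c Hc] := H b1; exists c; exact: rk_le_trans Hb1 Hc.
Qed.

Lemma rk_lt_trans a b c : rk_lt a b -> rk_lt b c -> rk_lt a c.
Proof. move=> H1 H2; apply: (rk_lt_le_trans H1); exact: rk_lt_le. Qed.

Lemma rk_lt_irr x : ~ rk_lt x x.
Proof.
elim: x => A f IH /= [a Ha]; move: (Ha a).
case fa: (f a) => [A' f'] /= [k Hk].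
apply: (IH a); rewrite fa /=; by exists k.
Qed.

Lemma memV_rk_lt a b : memV a b -> rk_lt a b.
Proof. case: b => B g /= [b Hb]; exists b; exact: eqV_rk_le. Qed.

Lemma lit_in_Vars phi l x : List.In l phi -> x \in lit_vars l -> x \in Vars phi.
Proof.
rewrite /Vars mem_undup; elim: phi => //= a ph IH [->|H] Hx; rewrite mem_cat ?Hx //.
by rewrite IH ?orbT.
Qed.

Section Main.
Variables (phi : formula) (M Mbar : assignment) (t s : Vset).
Notation V := (VV phi M Mbar t).
Notation MMn := (MM phi M Mbar t s).

Lemma VV_vars n u : V n u -> u \in Vars phi.
Proof. by case: n => [|n] []. Qed.

Lemma MM_char n v e : memV e (MMn n v) <->
  memV e (M v) \/ (V 0 v /\ eqV e s) \/
  (exists j u, j < n /\ V j u /\ V j.+1 v /\ memV (M u) (M v) /\ eqV e (MMn j u)).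
Proof.
elim: n => [|n IH] /=.
- case: excluded_middle_informative => HV.
  + rewrite memV_union memV_single; split.
    * by case=> H; [left|right; left].
    * by case=> [H|[[_ H]|[j [u [Hj _]]]]]; [left|right|].
  + split; first by left.
    by case=> [H|[[H _]|[j [u [Hj _]]]]].
- case: excluded_middle_informative => HV.
  + rewrite memV_union IH; split.
    * case=> [[H|[H|[j [u [Hj R]]]]]|[[u [Hu Hm]] He]].
      -- by left.
      -- by right; left.
      -- right; right; exists j, u; split=> //; exact: ltnW.
      -- right; right; exists n, u; do 4!split=> //.
    * case=> [H|[H|[j [u [Hj [Hu [Hv [Hm He]]]]]]]].
      -- by left; left.
      -- by left; right; left.
      -- move: Hj; rewrite ltnS leq_eqVlt => /orP [/eqP Ej|Hj].
         ++ subst j; right; by exists (exist _ u (conj Hu Hm)).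
         ++ left; right; right; exists j, u; do 4!split=> //.
  + rewrite IH; split.
    * case=> [H|[H|[j [u [Hj R]]]]]; [by left|by right; left|].
      right; right; exists j, u; split=> //; exact: ltnW.
    * case=> [H|[H|[j [u [Hj [Hu [Hv [Hm He]]]]]]]]; [by left|by right; left|].
      move: Hj; rewrite ltnS leq_eqVlt => /orP [/eqP Ej|Hj].
      -- by subst j.
      -- right; right; exists j, u; do 4!split=> //.
Qed.

Lemma MM_M n v e : memV e (M v) -> memV e (MMn n v).
Proof. by move=> H; apply/MM_char; left. Qed.

Lemma MM_mono n v e : memV e (MMn n v) -> memV e (MMn n.+1 v).
Proof.
move/MM_char=> H; apply/MM_char.
case: H => [H|[H|[j [u [Hj R]]]]]; [by left|by right; left|].
right; right; exists j, u; split=> //; exact: ltnW.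
Qed.

Lemma chain n u : V n u -> exists ws : seq nat,
  [/\ uniq (u :: ws), size ws = n, {subset (u :: ws) <= Vars phi} &
      forall w, w \in ws -> clos_trans _ memV (M w) (M u)].
Proof.
elim: n u => [|n IH] u /=.
- case=> Hu _; exists [::]; split=> //.
  by move=> w; rewrite mem_seq1 => /eqP ->.
- case=> Hu [w [Hw Hm]]; have [ws [Hun Hsz Hsub Htc]] := IH w Hw.
  have Htc' : forall w', w' \in w :: ws -> clos_trans _ memV (M w') (M u).
    move=> w'; rewrite inE => /orP [/eqP ->|Hw']; first exact: t_step.
    exact: t_trans (Htc w' Hw') (t_step _ _ _ _ Hm).
  exists (w :: ws); split.
  + apply/andP; split=> //; apply/negP => Hin.
    exact: acc_irr (wf_clos_trans _ _ wf_memV (M u)) (Htc' u Hin).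
  + by rewrite /= Hsz.
  + move=> x; rewrite inE => /orP [/eqP ->|]; first done.
    exact: Hsub.
  + exact: Htc'.
Qed.

Lemma VV_N u : ~ V (size (Vars phi)) u.
Proof.
move=> H; have [ws [Hun Hsz Hsub _]] := chain H.
have := uniq_leq_size Hun Hsub; by rewrite /= Hsz ltnn.
Qed.

Lemma mem_lit x y : memV (M x) (M y) -> y \in Vars phi ->
  forall n, memV (MMn n x) (MMn n y) \/ V n x.
Proof.
move=> Hm Hy; elim=> [|n IH].
- case: (excluded_middle_informative (V 0 x)) => Hx; [by right|left].
  have -> : MMn 0 x = M x.
    by rewrite /=; case: excluded_middle_informative => // H0; case: (Hx H0).
  exact: MM_M.
- case: (excluded_middle_informative (V n.+1 x)) => Hx; [by right|left].
  have -> : MMn n.+1 x = MMn n x.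
    by rewrite /=; case: excluded_middle_informative => // H0; case: (Hx H0).
  case: IH => [H|H]; first exact: MM_mono.
  apply/MM_char; right; right; exists n, x; do 3!split=> //.
  + split=> //; exists x; by split.
  + split=> //; exact: eqV_refl.
Qed.

Hypothesis Hrk : rank_assign_lt phi M s.

Lemma new_rk k u : V k u -> rk_lt s (MMn k u).
Proof.
elim: k u => [|k IH] u H.
- apply: memV_rk_lt; apply/MM_char; right; left; split=> //; exact: eqV_refl.
- have [_ [w [Hw Hm]]] := H; apply: rk_lt_trans (IH w Hw) _.
  apply: memV_rk_lt; apply/MM_char; right; right; exists k, w; do 4!split=> //.
  exact: eqV_refl.
Qed.

Lemma old_M v e : v \in Vars phi -> memV e (M v) -> rk_lt e s.
Proof. move=> Hv H; exact: rk_lt_trans (memV_rk_lt H) (Hrk Hv). Qed.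

Lemma s_not_old e : eqV e s -> ~ rk_lt e s.
Proof.
move=> He Hlt; apply: (@rk_lt_irr s).
exact: rk_le_lt_trans (eqV_rk_le (eqV_sym He)) Hlt.
Qed.

Lemma new_not_old e k u : V k u -> eqV e (MMn k u) -> ~ rk_lt e s.
Proof.
move=> Hu He Hlt; apply: (@rk_lt_irr s).
exact: rk_lt_le_trans (new_rk Hu) (rk_le_trans (eqV_rk_le (eqV_sym He)) (rk_lt_le Hlt)).
Qed.

Lemma s_new e k u : V k u -> eqV e s -> eqV e (MMn k u) -> False.
Proof.
move=> Hu He1 He2; apply: (@rk_lt_irr s).
exact: rk_lt_le_trans (new_rk Hu) (rk_le_trans (eqV_rk_le (eqV_sym He2)) (eqV_rk_le He1)).
Qed.

Lemma old_sub j u j' u' : V j u -> V j' u' -> eqV (MMn j u) (MMn j' u') ->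
  forall e, memV e (M u) -> memV e (M u').
Proof.
move=> Hu Hu' E e He.
have H1 : memV e (MMn j' u') by apply: memV_r E _; apply/MM_char; left.
have Hold := old_M (VV_vars Hu) He.
move/MM_char: H1 => [//|[[_ Hs]|[j2 [u2 [_ [Hu2 [_ [_ He2]]]]]]]].
- by case: (s_not_old Hs Hold).
- by case: (new_not_old Hu2 He2 Hold).
Qed.

Lemma old_part j u j' u' z : V j u -> V j' u' -> eqV (MMn j u) (MMn j' u') ->
  memV (M u) (M z) -> memV (M u') (M z).
Proof.
move=> Hu Hu' E Hm; apply: memV_l Hm; apply: ext.
- exact: old_sub Hu Hu' E.
- exact: old_sub Hu' Hu (eqV_sym E).
Qed.

Lemma diff_lit x y z n : x \in Vars phi -> y \in Vars phi -> z \in Vars phi ->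
  eqV (M x) (setdiff (M y) (M z)) -> eqV (Mbar x) (setdiff (Mbar y) (Mbar z)) ->
  eqV (MMn n x) (setdiff (MMn n y) (MMn n z)).
Proof.
move=> Hxv Hyv Hzv HMx HMbx.
have HM : forall e, memV e (M x) <-> memV e (M y) /\ ~ memV e (M z).
  move=> e; split=> H; first by apply/memV_setdiff; apply: memV_r HMx H.
  by apply: memV_r (eqV_sym HMx) _; apply/memV_setdiff.
have HMb : memV t (Mbar x) <-> memV t (Mbar y) /\ ~ memV t (Mbar z).
  split=> H; first by apply/memV_setdiff; apply: memV_r HMbx H.
  by apply: memV_r (eqV_sym HMbx) _; apply/memV_setdiff.
have HV0 : V 0 x <-> V 0 y /\ ~ V 0 z.
  rewrite /=; split.
  - case=> _ /HMb [H1 H2]; split=> //; by case.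
  - case=> [[_ H1] H2]; split=> //; apply/HMb; split=> // H3; exact: H2.
apply: ext => e.
- move/MM_char => Hx; apply/memV_setdiff.
  case: Hx => [H|[[H0 Hs]|[j [u [Hj [Hu [Hvx [Hux He]]]]]]]].
  + have [Hy Hz] := (HM e).1 H; split; first by apply/MM_char; left.
    have Ho := old_M Hxv H.
    move/MM_char => [//|[[_ Hs]|[j [u [_ [Hu [_ [_ He]]]]]]]].
    * exact: s_not_old Hs Ho.
    * exact: new_not_old Hu He Ho.
  + have [Hy Hz] := HV0.1 H0; split; first by apply/MM_char; right; left.
    move/MM_char => [Hz'|[[Hz' _]|[j [u [_ [Hu [_ [_ He]]]]]]]].
    * exact: s_not_old Hs (old_M Hzv Hz').
    * exact: Hz Hz'.
    * exact: s_new Hu Hs He.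
  + have [Hy Hz] := (HM (M u)).1 Hux; split.
    * apply/MM_char; right; right; exists j, u; do 2!split=> //.
      split; first by split=> //; exists u.
      by split.
    * move/MM_char => [Hz'|[[_ Hs]|[j' [u' [_ [Hu' [_ [Hu'z He']]]]]]]].
      -- exact: new_not_old Hu He (old_M Hzv Hz').
      -- exact: s_new Hu Hs He.
      -- apply: Hz; apply: old_part Hu' Hu _ Hu'z.
         exact: eqV_trans (eqV_sym He') He.
- move/memV_setdiff => [Hy Hnz]; apply/MM_char.
  move/MM_char: Hy => [H|[[H0 Hs]|[j [u [Hj [Hu [Hvy [Huy He]]]]]]]].
  + left; apply/HM; split=> // Hz; apply: Hnz; apply/MM_char; by left.
  + right; left; split=> //; apply/HV0; split=> // Hz; apply: Hnz.
    by apply/MM_char; right; left.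
  + right; right; exists j, u.
    have Hnuz : ~ memV (M u) (M z).
      move=> Hz; apply: Hnz; apply/MM_char; right; right; exists j, u.
      do 2!split=> //; split; first by split=> //; exists u.
      by split.
    have Hux : memV (M u) (M x) by apply/HM.
    do 2!split=> //; split; first by split=> //; exists u.
    by split.
Qed.

Lemma main_sat : satisfies M phi -> satisfies Mbar phi ->
  satisfies (MMn (size (Vars phi))) phi.
Proof.
move=> HM HMb l Hl.
case: l Hl => [x y|x y z] Hl /=.
- have Hy : y \in Vars phi by apply: (lit_in_Vars Hl); rewrite !inE eqxx orbT.
  have Hm := HM _ Hl.
  by case: (mem_lit Hm Hy (size (Vars phi))) => // /VV_N.
- apply: diff_lit.
  + by apply: (lit_in_Vars Hl); rewrite !inE eqxx.
  + by apply: (lit_in_Vars Hl); rewrite !inE eqxx orbT.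
  + by apply: (lit_in_Vars Hl); rewrite !inE eqxx !orbT.
  + exact: HM _ Hl.
  + exact: HMb _ Hl.
Qed.

End Main.

Unset Implicit Arguments.
Theorem lemma10 (phi : formula) (M Mbar : assignment) (xb yb : nat) (t s : Vset) :
  satisfies M phi ->
  xb \in Vars phi -> yb \in Vars phi ->
  satisfies Mbar phi ->
  ~ eqV (Mbar xb) (Mbar yb) ->
  ((memV t (Mbar xb) /\ ~ memV t (Mbar yb)) \/ (memV t (Mbar yb) /\ ~ memV t (Mbar xb))) ->
  rank_assign_lt phi M s ->
  satisfies (MM phi M Mbar t s (size (Vars phi))) phi.
Proof.
move=> HM _ _ HMb _ _ Hrk; exact: main_sat.
Qed.
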